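(* Let $n,N\ge1$ be integers, $0<p<1$, $0<\epsilon_1,\epsilon_2<1$, and $\beta>0$ with $L=\beta n$ a positive integer, and suppose $\beta\ge\beta_{\mathsf{Th}}$ and $N\ge N_{\mathsf{Th}}$, where $$\beta_{\mathsf{Th}}=\frac{\log_{2}\left(\dfrac{N\left((1+2p-p^2)^n-1\right)}{(\epsilon_1/2^n)^{1/N}}\right)}{n\left(1-\log_2(1+2p-p^2)\right)},\qquad N_{\mathsf{Th}}=\frac{\log_2\left(\left(1+\frac{\epsilon_2}{2^{n}}\right)^{1/n}-1\right)}{\log_2(p)}.$$ Then in the random model described in the context, the expected number of data comparisons performed by the Data-driven Pruning Algorithm is at most $\mathcal{U}_0=N^2 2^n(1+2p-p^2)^n$.
   Context: Model: $M=2^n$, addresses $C=\{0,1\}^n$; each address $\mathbf{x}$ carries a strand $(\mathbf{x},\mathbf{d})$ with data $\mathbf{d}$ independent uniform on $\{0,1\}^L$. Each strand is sent $N$ times through $\mathsf{BEC}(p)$ (each symbol independently erased to $*$ with probability $p$); $\mathcal{Y}$ is the unordered multiset of all $MN$ reads $(\mathbf{y},\mathbf{d}')$. Words $\mathbf{u},\mathbf{v}\in\{0,1,*\}^\ell$ agree, $\mathbf{u}\cong\mathbf{v}$, if they coincide wherever neither is erased; reads agree if both address and data parts agree. Graph $\mathcal{G}$: bipartite, left vertices $C$, right vertices the reads, edge $\mathbf{x}$–$(\mathbf{y},\mathbf{d}')$ iff $\mathbf{x}\cong\mathbf{y}$; $E_{(\mathbf{y},\mathbf{d}')}$ is the set of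 left neighbours of a read in the current graph, and $\mathcal{N}_{(\mathbf{y},\mathbf{d}')}$ (two-hop neighbourhood) is the set of other reads sharing a left neighbour with $(\mathbf{y},\mathbf{d}')$ in the current graph. Data-driven Pruning Algorithm: Start with no read marked pruned. While fewer than $N2^n$ reads are pruned, choose a not-yet-pruned read $(\tilde{\mathbf{y}},\tilde{\mathbf{d}}')$ minimizing $|\mathcal{N}_{(\tilde{\mathbf{y}},\tilde{\mathbf{d}}')}|$ and call PRUNE on it: mark it pruned; for each read $(\mathbf{y},\mathbf{d}')\in\mathcal{N}_{(\tilde{\mathbf{y}},\tilde{\mathbf{d}}')}$ perform one data comparison, i.e. test $(\mathbf{y},\mathbf{d}')\cong(\tilde{\mathbf{y}},\tilde{\mathbf{d}}')$, and put those passing into a set $\mathcal{T}$; if $|\mathcal{T}|=N-1$, let $\mathcal{X}^*=\bigcap_{(\mathbf{y},\mathbf{d}')\in\mathcal{T}}E_{(\mathbf{y},\mathbf{d}')}$, delete every edge between a read of $\mathcal{T}$ and a left vertex outside $\mathcal{X}^*$, and mark all reads of $\mathcal{T}$ pruned. Afterwards a peeling matching procedure (which performs no data comparisons) is run on the resulting graph. The number of data comparisons is the total number of tests $(\mathbf{y},\mathbf{d}')\cong(\tilde{\mathbf{y}},\tilde{\mathbf{d}}')$ performed in all calls of PRUNE. *)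

(* Defs.v *)
From HB Require Import structures.
From mathcomp Require Import all_boot all_order all_algebra.
From mathcomp Require Import all_classical all_reals all_analysis.
Set Implicit Arguments. Unset Strict Implicit. Unset Printing Implicit Defensive.
Import Order.TTheory GRing.Theory Num.Theory.
Local Open Scope ring_scope.

Definition addr (n : nat) := {ffun 'I_n -> bool}.
Definition dat (L : nat) := {ffun 'I_L -> bool}.
(* a read is identified by the address of its strand and the copy index j < N
   (this identity is only used to distinguish the elements of the multiset) *)
Definition read_id (n N : nat) := (addr n * 'I_N)%type.
(* erasure pattern of one read: true = symbol erased *)
Definition erasure (n L : nat) := ({ffun 'I_n -> bool} * {ffun 'I_L -> bool})%type.
Definition outcome (n N L : nat) :=
  ({ffun addr n -> dat L} * {ffun read_id n N -> erasure n L})%type.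

(* symbol through BEC: None = erasure symbol * *)
Definition erase_bit (e b : bool) : option bool := if e then None else Some b.

Definition read_addr n N L (w : outcome n N L) (r : read_id n N)
  : {ffun 'I_n -> option bool} :=
  [ffun i => erase_bit ((w.2 r).1 i) (r.1 i)].
Definition read_dat n N L (w : outcome n N L) (r : read_id n N)
  : {ffun 'I_L -> option bool} :=
  [ffun i => erase_bit ((w.2 r).2 i) (w.1 r.1 i)].

Definition agree (I : finType) (u v : {ffun I -> option bool}) : bool :=
  [forall i, (u i == None) || (v i == None) || (u i == v i)].

Definition addr_agree n (x : addr n) (y : {ffun 'I_n -> option bool}) : bool :=
  agree [ffun i => Some (x i)] y.

Definition read_agree n N L (w : outcome n N L) (r r' : read_id n N) : bool :=
  agree (read_addr w r) (read_addr w r') && agree (read_dat w r) (read_dat w r').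

(* state: (current edge set of G, set of pruned reads) *)
Definition state (n N : nat) :=
  ({set (addr n * read_id n N)} * {set read_id n N})%type.

Definition init_adj n N L (w : outcome n N L) : {set (addr n * read_id n N)} :=
  [set e | addr_agree e.1 (read_addr w e.2)].

Definition nbrs n N (adj : {set (addr n * read_id n N)}) (r : read_id n N)
  : {set addr n} := [set x | (x, r) \in adj].

Definition two_hop n N (adj : {set (addr n * read_id n N)}) (r : read_id n N)
  : {set read_id n N} :=
  [set r' | (r' != r) && [exists x, ((x, r) \in adj) && ((x, r') \in adj)]].

(* PRUNE(rt): returns the new state and the number of data comparisons *)
Definition prune n N L (w : outcome n N L) (st : state n N) (rt : read_id n N)
  : state n N * nat :=
  let adj := st.1 in
  let Nb := two_hop adj rt in
  let T := [set r in Nb | read_agree w r rt] in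
  let pr1 := rt |: st.2 in
  if #|T| == N.-1 then
    let X := \bigcap_(r in T) nbrs adj r in
    (([set e in adj | (e.2 \notin T) || (e.1 \in X)], T :|: pr1), #|Nb|)
  else ((adj, pr1), #|Nb|).

Definition valid_sel n N L (sel : outcome n N L -> state n N -> read_id n N) :=
  forall (w : outcome n N L) (st : state n N), (exists r : read_id n N, r \notin st.2) ->
    sel w st \notin st.2 /\
    forall r, r \notin st.2 -> (#|two_hop st.1 (sel w st)| <= #|two_hop st.1 r|)%N.

Fixpoint run n N L (w : outcome n N L)
  (sel : outcome n N L -> state n N -> read_id n N) (fuel : nat) (st : state n N)
  : nat :=
  match fuel with
  | 0 => 0
  | k.+1 =>
    if (#|st.2| < N * 2 ^ n)%N then
      let pc := prune w st (sel w st) in pc.2 + run w sel k pc.1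
    else 0
  end.

(* each iteration prunes at least one new read, so N*2^n iterations suffice *)
Definition comparisons n N L (sel : outcome n N L -> state n N -> read_id n N)
  (w : outcome n N L) : nat :=
  run w sel (N * 2 ^ n) (init_adj w, (finset.set0 : {set read_id n N})).

Definition bw (R : realType) (p : R) (b : bool) : R := if b then p else 1 - p.

Definition prob (R : realType) (p : R) n N L (w : outcome n N L) : R :=
  (\prod_(x : addr n) (2^-1) ^+ L) *
  \prod_(r : read_id n N)
     ((\prod_(i < n) bw p ((w.2 r).1 i)) * \prod_(i < L) bw p ((w.2 r).2 i)).

Definition expected_comparisons (R : realType) (p : R) n N L
  (sel : outcome n N L -> state n N -> read_id n N) : R :=
  \sum_(w : outcome n N L) prob p w * (comparisons sel w)%:R.

Definition log2 (R : realType) (x : R) : R := ln x / ln 2.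

Definition beta_Th (R : realType) (n N : nat) (p eps1 : R) : R :=
  log2 (N%:R * ((1 + 2 * p - p ^+ 2) ^+ n - 1) /
        ((eps1 / 2 ^+ n) `^ (N%:R^-1)))
  / (n%:R * (1 - log2 (1 + 2 * p - p ^+ 2))).

Definition N_Th (R : realType) (n : nat) (p eps2 : R) : R :=
  log2 ((1 + eps2 / 2 ^+ n) `^ (n%:R^-1) - 1) / log2 p.

(* Main.v *)
Require Import Defs.
From HB Require Import structures.
From mathcomp Require Import all_boot all_order all_algebra.
From mathcomp Require Import all_classical all_reals all_analysis.
From mathcomp Require Import ring lra.
Import Order.TTheory GRing.Theory Num.Theory.
Local Open Scope ring_scope.

Section Prob.
Variable R : realType.


Lemma sum_ind {J : finType} (x : J) (f : J -> R) :
  \sum_a ((x == a)%:R * f a) = f x.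
Proof.
rewrite (bigD1 x) //= eqxx mul1r big1 ?addr0 // => a /negPf.
by rewrite eq_sym => ->; rewrite mul0r.
Qed.

Lemma prod_ind {I : finType} (i0 : I) (g : I -> R) :
  \prod_i (if i == i0 then g i else 1) = g i0.
Proof.
rewrite (bigD1 i0) //= eqxx big1 ?mulr1 // => i /negPf ->. by [].
Qed.

Lemma nat_forall (I : finType) (b : I -> bool) :
  ([forall i, b i])%:R = \prod_i ((b i)%:R : R).
Proof.
case: (boolP [forall i, b i]) => [/forallP H|/fintype.forallPn [i /negPf Hi]].
  by rewrite big1 // => i _; rewrite H.
by rewrite (bigD1 i) //= Hi mul0r.
Qed.

Lemma marg2 (I J : finType) (mu : J -> R) (H : J -> J -> R) (i0 i1 : I) :
  i0 != i1 -> \sum_j mu j = 1 ->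
  \sum_(E : {ffun I -> J}) (\prod_i mu (E i)) * H (E i0) (E i1) =
  \sum_a \sum_b mu a * mu b * H a b.
Proof.
move=> ne s1.
have e1 : forall E : {ffun I -> J}, H (E i0) (E i1) =
    \sum_a \sum_b ((E i0 == a)%:R * (E i1 == b)%:R * H a b).
  move=> E; rewrite -(sum_ind (E i0) (fun a => H a (E i1))).
  apply: eq_bigr => a _; rewrite -(sum_ind (E i1) (H a)) mulr_sumr.
  by apply: eq_bigr => b _; rewrite mulrA.
under eq_bigr => E _ do rewrite e1 mulr_sumr.
rewrite exchange_big /=; apply: eq_bigr => a _.
under eq_bigr => E _ do rewrite mulr_sumr.
rewrite exchange_big /=; apply: eq_bigr => b _.
pose F i e := mu e * (if i == i0 then (e == a)%:R else 1) *
                    (if i == i1 then (e == b)%:R else 1).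
have e2 : forall E : {ffun I -> J}, \prod_i mu (E i) *
     ((E i0 == a)%:R * (E i1 == b)%:R * H a b) = (\prod_i F i (E i)) * H a b.
  move=> E; rewrite /F !big_split /=.
  rewrite (prod_ind i0 (fun i => ((E i == a)%:R))).
  rewrite (prod_ind i1 (fun i => ((E i == b)%:R))).
  by rewrite !mulrA.
under eq_bigr => E _ do rewrite e2.
rewrite -mulr_suml -bigA_distr_bigA /=.
rewrite (bigD1 i0) //= (bigD1 i1) /=; last by rewrite eq_sym.
rewrite [X in _ * (_ * X) * _]big1 ?mulr1; last first.
  move=> i /andP[h0 h1]; rewrite /F (negPf h0) (negPf h1).
  by under eq_bigr => e _ do rewrite !mulr1.
rewrite /F eqxx (negPf ne) eq_sym (negPf ne) eqxx.
rewrite -(sum_ind a mu) -(sum_ind b mu).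
congr (_ * _ * _); apply: eq_bigr => e _; rewrite mulr1 mulrC ?mul1r eq_sym //.
Qed.

Lemma sum_pair_split {T1 T2 : finType} (f : T1 -> R) (g : T2 -> R) :
  \sum_(x : T1 * T2) f x.1 * g x.2 = (\sum_a f a) * (\sum_b g b).
Proof.
rewrite -(pair_bigA _ (fun a b => f a * g b)) /= mulr_suml.
by apply: eq_bigr => a _; rewrite mulr_sumr.
Qed.

Variable p : R.
Hypothesis p01 : 0 < p < 1.

Lemma bw_ge0 b : 0 <= bw p b.
Proof. case/andP: p01 => h0 h1; rewrite /bw; case: b; lra. Qed.

Lemma sum_bw_ffun m : \sum_(f : {ffun 'I_m -> bool}) \prod_i bw p (f i) = 1.
Proof.
rewrite -(@bigA_distr_bigA _ _ _ _ _ _ _ (fun (_ : 'I_m) b => bw p b)); apply: big1 => i _; rewrite big_bool /bw /=; ring.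
Qed.

Definition mu {n L} (e : erasure n L) : R :=
  (\prod_i bw p (e.1 i)) * \prod_i bw p (e.2 i).

Lemma sum_mu n L : \sum_(e : erasure n L) mu e = 1.
Proof.
rewrite /mu (sum_pair_split (fun a : {ffun 'I_n -> bool} => \prod_i bw p (a i))
   (fun a : {ffun 'I_L -> bool} => \prod_i bw p (a i))).
by rewrite !sum_bw_ffun mulr1.
Qed.

Definition compat {n N L} (w : outcome n N L) (r r' : read_id n N) : bool :=
  [forall i, (w.2 r).1 i || (w.2 r').1 i || (r.1 i == r'.1 i)].

Definition cf (x y : bool) : R := if x == y then 1 else 2 * p - p ^+ 2.

Lemma sumA_one n L : \sum_(d : {ffun addr n -> dat L})
   \prod_(x : addr n) (2^-1 : R) ^+ L = 1.
Proof.
rewrite sumr_const prodr_const card_ffun !card_ffun !card_bool !card_ord.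
rewrite -(mulr_natr _ ((2^L)^(2^n))) natrX natrX -exprMn -exprMn.
by rewrite mulVf ?expr1n // pnatr_eq0.
Qed.

Lemma bits_sum m (g : 'I_m -> bool -> bool -> R) :
  \sum_(a1 : {ffun 'I_m -> bool}) (\prod_i bw p (a1 i)) *
    \sum_(b1 : {ffun 'I_m -> bool}) (\prod_i bw p (b1 i)) * \prod_i g i (a1 i) (b1 i)
  = \prod_i \sum_u \sum_v bw p u * (bw p v * g i u v).
Proof.
rewrite (@bigA_distr_bigA _ _ _ _ _ _ _ (fun i u => \sum_v bw p u * (bw p v * g i u v))).
apply: eq_bigr => a1 _.
rewrite (@bigA_distr_bigA _ _ _ _ _ _ _ (fun i v => bw p (a1 i) * (bw p v * g i (a1 i) v))).
rewrite mulr_sumr; apply: eq_bigr => b1 _.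
by rewrite !big_split.
Qed.

Lemma bit_cf (x y : bool) :
  \sum_u \sum_v bw p u * (bw p v * ((u || v || (x == y)))%:R) = cf x y.
Proof.
rewrite /cf; case: (x == y); rewrite !big_bool /bw /= ?orbT ?orbF; ring.
Qed.

Lemma expect_compat n N L (r r' : read_id n N) : r != r' ->
  \sum_(w : outcome n N L) prob p w * (compat w r r')%:R =
  \prod_i cf (r.1 i) (r'.1 i).
Proof.
move=> ne.
rewrite -(pair_bigA _ (fun d E => prob p (d, E) * (compat (d, E) r r')%:R)) /=.
pose H (a b : erasure n L) : R :=
  \prod_i ((a.1 i || b.1 i || (r.1 i == r'.1 i)))%:R.
have e1 : forall d (E : {ffun read_id n N -> erasure n L}),
   prob p (d, E) * (compat (d, E) r r')%:R =
   (\prod_(x : addr n) (2^-1 : R) ^+ L) * ((\prod_s mu (E s)) * H (E r) (E r')).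
  by move=> d E; rewrite /prob /compat nat_forall /= mulrA.
under eq_bigr => d _ do under eq_bigr => E _ do rewrite e1.
under eq_bigr => d _ do rewrite -mulr_sumr.
rewrite -mulr_suml sumA_one mul1r.
rewrite (@marg2 _ _ mu H r r' ne (sum_mu n L)).
pose P m (f : {ffun 'I_m -> bool}) := \prod_i bw p (f i).
pose G (a1 b1 : {ffun 'I_n -> bool}) : R :=
  \prod_i ((a1 i || b1 i || (r.1 i == r'.1 i)))%:R.
have e2 : forall a : erasure n L, \sum_b mu a * mu b * H a b =
   mu a * \sum_(b1 : {ffun 'I_n -> bool}) P n b1 * G a.1 b1.
  move=> a.
  have e3 : forall b : erasure n L, mu a * mu b * H a b =
     mu a * ((P n b.1 * G a.1 b.1) * P L b.2) by move=> b; rewrite /mu /H /G /P; ring.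
  under eq_bigr => b _ do rewrite e3.
  rewrite -mulr_sumr (sum_pair_split (fun b1 => P n b1 * G a.1 b1) (P L)).
  by rewrite /P sum_bw_ffun mulr1.
rewrite (eq_bigr _ (fun a _ => e2 a)).
have e4 : forall a : erasure n L, mu a * \sum_(b1 : {ffun 'I_n -> bool}) P n b1 * G a.1 b1
   = (P n a.1 * \sum_(b1 : {ffun 'I_n -> bool}) P n b1 * G a.1 b1) * P L a.2.
  by move=> a; rewrite /mu /P; ring.
rewrite (eq_bigr _ (fun a _ => e4 a)).
rewrite (sum_pair_split (fun a1 => P n a1 * \sum_(b1 : {ffun 'I_n -> bool}) P n b1 * G a1 b1) (P L)).
rewrite {2}/P sum_bw_ffun mulr1 /P /G (@bits_sum n (fun i u v => ((u || v || (r.1 i == r'.1 i)))%:R)).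
by apply: eq_bigr => i _; rewrite bit_cf.
Qed.

End Prob.
Arguments cf {R} p x y.
Arguments bw_ge0 {R p} p01 b.
Arguments expect_compat {R p n N L} r r' _.
Lemma two_hop_mono n N (a b : {set (addr n * read_id n N)}) r :
  a \subset b -> (#|two_hop a r| <= #|two_hop b r|)%N.
Proof.
move=> sab; apply: subset_leq_card. apply/fintype.subsetP => r'.
rewrite !inE => /andP[-> /existsP[x /andP[h1 h2]]] /=.
by apply/existsP; exists x; rewrite (fintype.subsetP sab _ h1) (fintype.subsetP sab _ h2).
Qed.

Lemma card_read n N : #|{: read_id n N}| = (N * 2 ^ n)%N.
Proof. by rewrite card_prod card_ffun card_bool !card_ord mulnC. Qed.

Lemma run_bound n N L (w : outcome n N L) sel : valid_sel sel ->
  forall fuel (st : state n N), st.1 \subset init_adj w ->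
  (run w sel fuel st <= \sum_(r | r \notin st.2) #|two_hop (init_adj w) r|)%N.
Proof.
move=> vs; elim=> [|k IH] st sub /=; first by [].
case: ifP => // hlt.
have [r0 hr0] : exists r : read_id n N, r \notin st.2.
  apply/existsP; apply: contraLR hlt; rewrite negb_exists => /forallP H.
  rewrite -leqNgt -card_read; apply: subset_leq_card; apply/fintype.subsetP => r _.
  by move: (H r); rewrite negbK.
have [hsel _] := vs w st (ex_intro _ r0 hr0).
set rt := sel w st.
rewrite (bigD1 rt) //=.
have hc : ((prune w st rt).2 <= #|two_hop (init_adj w) rt|)%N.
  rewrite /prune; case: ifP => _ /=; exact: two_hop_mono.
have hs1 : (prune w st rt).1.1 \subset init_adj w.
  rewrite /prune; case: ifP => _ //=.
  apply: fintype.subset_trans sub; apply/fintype.subsetP => e; rewrite inE; by case/andP.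
have hs2 : rt |: st.2 \subset (prune w st rt).1.2.
  rewrite /prune; case: ifP => _ //=; exact: finset.subsetUr.
apply: leq_add => //.
apply: leq_trans (IH _ hs1) _.
rewrite [X in (_ <= X)%N](big_mkcond) [X in (X <= _)%N]big_mkcond /=.
apply: leq_sum => r _.
case: ifP => h1 //.
have : r \notin rt |: st.2 by apply: contra h1; apply: (fintype.subsetP hs2).
by rewrite !inE negb_or andbC => ->.
Qed.

Lemma two_hop_compat n N L (w : outcome n N L) r :
  (#|two_hop (init_adj w) r| <= \sum_r' ((r' != r) && compat w r r'))%N.
Proof.
have sub : two_hop (init_adj w) r \subset [set r' | (r' != r) && compat w r r'].
  apply/fintype.subsetP => r'; rewrite !inE => /andP[-> /existsP[x /andP[h1 h2]]] /=.
  move: h1 h2; rewrite !inE /addr_agree /agree => /forallP h1 /forallP h2.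
  apply/forallP => i; move: (h1 i) (h2 i); rewrite /read_addr !ffunE /erase_bit /=.
  case: ((w.2 r).1 i); case: ((w.2 r').1 i) => //=.
  by move=> /eqP[<-] /eqP[<-].
apply: leq_trans (subset_leq_card sub) _.
rewrite -sum1_card big_mkcond /=; apply: leq_sum => r' _; rewrite inE.
by case: ((r' != r) && compat w r r').
Qed.

Theorem lemma6 (R : realType) (n N L : nat) (p eps1 eps2 beta : R)
  (sel : outcome n N L -> state n N -> read_id n N) :
  (1 <= n)%N -> (1 <= N)%N ->
  0 < p < 1 -> 0 < eps1 < 1 -> 0 < eps2 < 1 ->
  0 < beta -> (0 < L)%N -> beta * n%:R = L%:R ->
  beta_Th n N p eps1 <= beta -> N_Th n p eps2 <= N%:R ->
  valid_sel sel ->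
  expected_comparisons p sel <= N%:R ^+ 2 * 2 ^+ n * (1 + 2 * p - p ^+ 2) ^+ n.
Proof.
move=> _ _ hp _ _ _ _ _ _ _ vs.
have prob_ge0 : forall w : outcome n N L, 0 <= prob p w.
  move=> w; rewrite /prob; apply: mulr_ge0.
    apply: prodr_ge0 => x _; apply: exprn_ge0; rewrite invr_ge0; lra.
  apply: prodr_ge0 => r _; apply: mulr_ge0; apply: prodr_ge0 => i _; exact: (bw_ge0 hp).
have cf_ge0 : forall x y, 0 <= cf p x y.
  move=> x y; rewrite /cf; case: (x == y) => //; case/andP: hp => h0 h1; nra.
rewrite /expected_comparisons.
apply: (@le_trans _ _ (\sum_(w : outcome n N L) prob p w *
    (\sum_r \sum_r' ((r' != r) && compat w r r') : nat)%:R)).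
  apply: ler_sum => w _; apply: ler_wpM2l => //; rewrite ler_nat.
  have hb := @run_bound n N L w sel vs (N * 2 ^ n)%N (init_adj w, finset.set0) (fintype.subxx _).
  apply: leq_trans hb _.
  rewrite /=; under eq_bigl => r do rewrite inE /=.
  apply: leq_sum => r _; exact: two_hop_compat.
under eq_bigr => w _ do rewrite natr_sum mulr_sumr.
rewrite exchange_big /=.
under eq_bigr => r _ do (under eq_bigr => w _ do rewrite natr_sum mulr_sumr; rewrite exchange_big /=).
apply: (@le_trans _ _ (\sum_(r : read_id n N) \sum_(r' : read_id n N) \prod_i cf p (r.1 i) (r'.1 i))).
  apply: ler_sum => r _; apply: ler_sum => r' _.
  case: (eqVneq r' r) => [->|ne] /=.
    by rewrite big1 ?prodr_ge0 // => w _; rewrite mulr0.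
  rewrite expect_compat //; by rewrite eq_sym.
have inner : forall r : read_id n N,
    \sum_(r' : read_id n N) \prod_i cf p (r.1 i) (r'.1 i) =
    (1 + 2 * p - p ^+ 2) ^+ n *+ N.
  move=> r.
  rewrite -(pair_bigA _ (fun (x' : addr n) (j : 'I_N) => \prod_i cf p (r.1 i) (x' i))) /=.
  under eq_bigr => x' _ do rewrite sumr_const card_ord.
  rewrite sumrMnl; congr (_ *+ _).
  rewrite -(@bigA_distr_bigA _ _ _ _ _ _ _ (fun i b => cf p (r.1 i) b)) /=.
  rewrite (eq_bigr (fun _ => 1 + 2 * p - p ^+ 2)).
    by rewrite prodr_const card_ord.
  move=> i _; rewrite big_bool /cf; case: (r.1 i) => /=; ring.
under eq_bigr => r _ do rewrite inner.
rewrite sumr_const card_prod card_ffun card_bool !card_ord.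
rewrite -mulrnA -(mulr_natr _ (N * (2 ^ n * N))) !natrM natrX.
rewrite le_eqVlt; apply/orP; left; apply/eqP; ring.
Qed.
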